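(* Let $\alpha\in(0,1)$, $a,b\in\mathbb{R}$, $\tau>0$, and $Q(s)=s^\alpha-a-b e^{-s\tau}$ (principal branch of $s^\alpha$). There is no $s\in\mathbb{C}\setminus\{0\}$ (in the domain of $Q$) with $Q(s)=Q'(s)=Q''(s)=Q'''(s)=0$.
   Context: $s^\alpha=|s|^\alpha e^{i\alpha\arg s}$ with $\arg s\in(-\pi,\pi)$; derivatives are complex derivatives in $s$. *)

(* Defs.v *)
From Stdlib Require Import Reals.
Open Scope R_scope.

Definition Cpx : Type := (R * R)%type.
Definition Cre (z : Cpx) : R := fst z.
Definition Cim (z : Cpx) : R := snd z.
Definition RtoC (x : R) : Cpx := (x, 0).
Definition C0 : Cpx := (0, 0).
Definition Cadd (z w : Cpx) : Cpx := (Cre z + Cre w, Cim z + Cim w).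
Definition Copp (z : Cpx) : Cpx := (- Cre z, - Cim z).
Definition Csub (z w : Cpx) : Cpx := Cadd z (Copp w).
Definition Cmul (z w : Cpx) : Cpx :=
  (Cre z * Cre w - Cim z * Cim w, Cre z * Cim w + Cim z * Cre w).
Definition Cnorm (z : Cpx) : R := sqrt (Cre z * Cre z + Cim z * Cim z).
Definition Cinv (z : Cpx) : Cpx :=
  let d := Cre z * Cre z + Cim z * Cim z in (Cre z / d, - Cim z / d).
Definition Cdiv (z w : Cpx) : Cpx := Cmul z (Cinv w).
Definition Cexp (z : Cpx) : Cpx := (exp (Cre z) * cos (Cim z), exp (Cre z) * sin (Cim z)).

(* principal argument (atan2), with values in (-pi, pi] *)
Definition Carg (z : Cpx) : R :=
  let x := Cre z in let y := Cim z in
  match Rlt_dec 0 x with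
  | left _ => atan (y / x)
  | right _ =>
    match Rlt_dec x 0 with
    | left _ => match Rle_dec 0 y with
                | left _ => atan (y / x) + PI
                | right _ => atan (y / x) - PI
                end
    | right _ => match Rlt_dec 0 y with
                 | left _ => PI / 2
                 | right _ => match Rlt_dec y 0 with
                              | left _ => - (PI / 2)
                              | right _ => 0
                              end
                 end
    end
  end.

(* domain of the principal branch: arg s in (-pi, pi), s <> 0,
   i.e. Cpx minus the closed negative real half-line *)
Definition in_dom (z : Cpx) : Prop := z <> C0 /\ - PI < Carg z < PI.

Definition Cpow (s : Cpx) (alpha : R) : Cpx :=
  let r := Rpower (Cnorm s) alpha in let t := alpha * Carg s in
  (r * cos t, r * sin t).

Definition has_cderiv (f : Cpx -> Cpx) (z L : Cpx) : Prop :=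
  forall eps : R, 0 < eps -> exists delta : R, 0 < delta /\
    forall h : Cpx, h <> C0 -> Cnorm h < delta ->
      Cnorm (Csub (Cdiv (Csub (f (Cadd z h)) (f z)) h) L) < eps.

Definition Qfun (alpha a b tau : R) (s : Cpx) : Cpx :=
  Csub (Csub (Cpow s alpha) (RtoC a))
       (Cmul (RtoC b) (Cexp (Cmul (Copp s) (RtoC tau)))).

(* Main.v *)
Require Import Defs.
From Stdlib Require Import Reals Lra.
From Coquelicot Require Import Coquelicot.
Import Defs.
Open Scope R_scope.

Definition sc (c : R) (z : Cpx) : Cpx := (c * Cre z, c * Cim z).

Ltac negs := repeat match goal with
  | H : ~ _ < _ |- _ => apply Rnot_lt_le in H
  | H : ~ _ <= _ |- _ => apply Rnot_le_lt in H end.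

Lemma sq_pos (z : Cpx) : z <> C0 -> 0 < Cre z * Cre z + Cim z * Cim z.
Proof.
  destruct z as [x y]; unfold Cre, Cim, C0; simpl; intro H.
  destruct (Req_dec x 0), (Req_dec y 0).
  - subst; elim H; reflexivity.
  - assert (0 < y*y) by (apply Rsqr_pos_lt; auto). nra.
  - assert (0 < x*x) by (apply Rsqr_pos_lt; auto). nra.
  - assert (0 < y*y) by (apply Rsqr_pos_lt; auto). nra.
Qed.

Lemma Cnorm_pos (z : Cpx) : z <> C0 -> 0 < Cnorm z.
Proof. intro H; unfold Cnorm; apply sqrt_lt_R0, sq_pos, H. Qed.

Lemma Carg_sc c z : 0 < c -> Carg (sc c z) = Carg z.
Proof.
  intro Hc; destruct z as [x y]; unfold Carg, sc, Cre, Cim; simpl.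
  destruct (Rlt_dec 0 (c*x)), (Rlt_dec 0 x); negs; try (exfalso; nra).
  - f_equal; field; lra.
  - destruct (Rlt_dec (c*x) 0), (Rlt_dec x 0); negs; try (exfalso; nra).
    + destruct (Rle_dec 0 (c*y)), (Rle_dec 0 y); negs; try (exfalso; nra);
      f_equal; f_equal; field; lra.
    + destruct (Rlt_dec 0 (c*y)), (Rlt_dec 0 y); negs; try (exfalso; nra); auto.
      destruct (Rlt_dec (c*y) 0), (Rlt_dec y 0); negs; try (exfalso; nra); auto.
Qed.

Lemma Cnorm_sc c z : Cnorm (sc c z) = Rabs c * Cnorm z.
Proof.
  unfold Cnorm, sc, Cre, Cim; simpl.
  replace (c * fst z * (c * fst z) + c * snd z * (c * snd z))
    with ((c*c) * (fst z * fst z + snd z * snd z)) by ring.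
  rewrite sqrt_mult; [| nra | nra].
  rewrite <- sqrt_Rsqr_abs. reflexivity.
Qed.

Lemma Cpow_sc c z al : 0 < c -> z <> C0 -> Cpow (sc c z) al = sc (Rpower c al) (Cpow z al).
Proof.
  intros Hc Hz. unfold Cpow. rewrite Cnorm_sc, Carg_sc by auto.
  rewrite Rabs_pos_eq by lra.
  rewrite <- Rpower_mult_distr by (auto; apply Cnorm_pos; auto).
  unfold sc, Cre, Cim; simpl. f_equal; ring.
Qed.

Lemma Cinv_sc c z : 0 < c -> z <> C0 -> Cinv (sc c z) = sc (/c) (Cinv z).
Proof.
  intros Hc Hz. pose proof (sq_pos z Hz) as Hd.
  destruct z as [x y]; unfold Cinv, sc, Cre, Cim in *; simpl in *.
  assert (0 < c*c) by nra.
  assert (0 < c*x*(c*x)+c*y*(c*y)) by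
    (replace (c*x*(c*x)+c*y*(c*y)) with (c*c*(x*x+y*y)) by ring; apply Rmult_lt_0_compat; auto).
  f_equal; field; repeat split; lra.
Qed.

Lemma Cmul_sc s t m q : Cmul (sc s m) (sc t q) = sc (s*t) (Cmul m q).
Proof. unfold Cmul, sc, Cre, Cim; simpl; f_equal; ring. Qed.

Lemma sc_neq c z : 0 < c -> z <> C0 -> sc c z <> C0.
Proof.
  intros Hc Hz H. apply Hz. destruct z as [x y]; unfold sc, C0, Cre, Cim in *; simpl in *.
  injection H; intros H1 H2. f_equal; nra.
Qed.

Lemma in_dom_sc c z : 0 < c -> in_dom z -> in_dom (sc c z).
Proof.
  intros Hc [Hz Ha]. split. apply sc_neq; auto. rewrite Carg_sc; auto.
Qed.

Fixpoint Mk (al : R) (k : nat) (w : Cpx) : Cpx :=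
  match k with O => Cpow w al | S k => Cmul (Mk al k w) (Cinv w) end.

Lemma Mk_sc al k c z : 0 < c -> z <> C0 ->
  Mk al k (sc c z) = sc (exp (al * ln c) / c ^ k) (Mk al k z).
Proof.
  intros Hc Hz; induction k; simpl.
  - rewrite Cpow_sc by auto. unfold Rpower, sc; f_equal; field.
  - rewrite IHk, Cinv_sc, Cmul_sc by auto. f_equal. field. split; try lra.
    apply pow_nonzero; lra.
Qed.

Lemma Cexp_expl (v : Cpx) tau : Cexp (Cmul (Copp v) (RtoC tau)) =
  (exp (- (Cre v * tau)) * cos (- (Cim v * tau)), exp (- (Cre v * tau)) * sin (- (Cim v * tau))).
Proof.
  unfold Cexp, Cmul, Copp, RtoC, Cre, Cim; simpl.
  replace (- fst v * tau - - snd v * 0) with (- (fst v * tau)) by ring.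
  replace (- fst v * 0 + - snd v * tau) with (- (snd v * tau)) by ring.
  reflexivity.
Qed.

Lemma Cnorm_mul z w : Cnorm (Cmul z w) = Cnorm z * Cnorm w.
Proof.
  unfold Cnorm, Cmul, Cre, Cim; simpl. rewrite <- sqrt_mult by nra. f_equal; ring.
Qed.

Lemma Rabs_Cre z : Rabs (Cre z) <= Cnorm z.
Proof.
  unfold Cnorm. rewrite <- sqrt_Rsqr_abs. apply sqrt_le_1_alt. unfold Rsqr. nra.
Qed.
Lemma Rabs_Cim z : Rabs (Cim z) <= Cnorm z.
Proof.
  unfold Cnorm. rewrite <- sqrt_Rsqr_abs. apply sqrt_le_1_alt. unfold Rsqr. nra.
Qed.

Lemma alg_div D z L h : h <> 0 -> z <> C0 ->
  Cre (Cmul z (Csub (Cdiv D (sc h z)) L)) = Cre D / h - Cre (Cmul z L) /\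
  Cim (Cmul z (Csub (Cdiv D (sc h z)) L)) = Cim D / h - Cim (Cmul z L).
Proof.
  intros Hh Hz. pose proof (sq_pos z Hz) as Hd.
  destruct z as [x y], D as [d1 d2], L as [l1 l2].
  unfold Cmul, Csub, Cadd, Copp, Cdiv, Cinv, sc, Cre, Cim in *; simpl in *.
  assert (h*x*(h*x) + h*y*(h*y) <> 0).
  { replace (h*x*(h*x) + h*y*(h*y)) with ((h*h)*(x*x+y*y)) by ring.
    apply Rmult_integral_contrapositive; split; nra. }
  split; field; auto.
Qed.

Lemma sc_neq' c z : c <> 0 -> z <> C0 -> sc c z <> C0.
Proof.
  intros Hc Hz H. apply Hz. destruct z as [x y]; unfold sc, C0, Cre, Cim in *; simpl in *.
  injection H; intros H1 H2. apply Rmult_integral in H1. apply Rmult_integral in H2.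
  f_equal; [destruct H2|destruct H1]; tauto.
Qed.

Lemma L1 f z L : z <> C0 -> has_cderiv f z L ->
  is_derive (fun t => Cre (f (sc (1+t) z))) 0 (Cre (Cmul z L)) /\
  is_derive (fun t => Cim (f (sc (1+t) z))) 0 (Cim (Cmul z L)).
Proof.
  intros Hz HL. pose proof (Cnorm_pos z Hz) as Hn.
  assert (key: forall eps, 0<eps -> exists delta:posreal, forall h, h<>0 -> Rabs h < delta ->
     Cnorm (Cmul z (Csub (Cdiv (Csub (f (sc (1+(0+h)) z)) (f (sc (1+0) z))) (sc h z)) L)) < eps).
  { intros eps He. destruct (HL (eps / Cnorm z)) as [d [Hd0 Hd]].
    apply Rdiv_lt_0_compat; auto.
    assert (Hdn: 0 < d / Cnorm z) by (apply Rdiv_lt_0_compat; auto).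
    exists (mkposreal _ Hdn). intros h Hh0 Hh. simpl in Hh.
    replace (sc (1+(0+h)) z) with (Cadd z (sc h z)).
    2:{ destruct z; unfold Cadd, sc, Cre, Cim; simpl; f_equal; ring. }
    replace (sc (1+0) z) with z.
    2:{ destruct z; unfold sc, Cre, Cim; simpl; f_equal; ring. }
    rewrite Cnorm_mul.
    apply Rlt_le_trans with (Cnorm z * (eps / Cnorm z)).
    - apply Rmult_lt_compat_l; auto. apply Hd.
      + apply sc_neq'; auto.
      + rewrite Cnorm_sc. replace d with (d / Cnorm z * Cnorm z) by (field; lra).
        apply Rmult_lt_compat_r; auto.
    - right; field; lra. }
  split; apply is_derive_Reals; intros eps He; destruct (key eps He) as [d Hd]; exists d;
    intros h Hh0 Hh; specialize (Hd h Hh0 Hh);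
    destruct (alg_div (Csub (f (sc (1+(0+h)) z)) (f (sc (1+0) z))) z L h Hh0 Hz) as [A1 A2];
    cbv beta.
  - eapply Rle_lt_trans; [| exact Hd]. eapply Rle_trans; [| apply Rabs_Cre].
    rewrite A1. unfold Csub, Cadd, Copp, Cre; simpl. right; f_equal.
  - eapply Rle_lt_trans; [| exact Hd]. eapply Rle_trans; [| apply Rabs_Cim].
    rewrite A2. unfold Csub, Cadd, Copp, Cim; simpl. right; f_equal.
Qed.

Definition Ef (tau : R) (w : Cpx) : Cpx := Cexp (Cmul (Copp w) (RtoC tau)).
Definition Fk al tau k A B (c0 : Cpx) (w : Cpx) : Cpx :=
  Cadd c0 (Cadd (sc A (Mk al k w)) (sc B (Ef tau w))).

Lemma step al tau k A B c0 f g :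
  (forall w, in_dom w -> f w = Fk al tau k A B c0 w) ->
  (forall w, in_dom w -> has_cderiv f w (g w)) ->
  forall w, in_dom w -> g w = Fk al tau (S k) (A*(al - INR k)) (-tau*B) C0 w.
Proof.
  intros Hf Hg w Hw. destruct (L1 f w (g w) (proj1 Hw) (Hg w Hw)) as [D1 D2].
  assert (Hw0 := proj1 Hw). pose proof (sq_pos w Hw0) as Hd.
  destruct (Mk al k w) as [m1 m2] eqn:Hm.
  destruct w as [x y]. unfold Cre, Cim in Hd; simpl in Hd.
  assert (Hloc: locally 0 (fun t => 0 < 1 + t)).
  { exists (mkposreal 1 Rlt_0_1). intros t Ht.
    unfold ball in Ht; simpl in Ht; unfold AbsRing_ball, abs, minus, plus, opp in Ht; simpl in Ht.
    apply Rabs_def2 in Ht. lra. }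
  assert (U1 : Cre (Cmul (x,y) (g (x,y))) = A*(al-INR k)*m1 + B*(-tau)*(x*(exp(-(x*tau))*cos(-(y*tau))) - y*(exp(-(x*tau))*sin(-(y*tau))))).
  { rewrite <- (is_derive_unique _ _ _ D1). apply is_derive_unique.
    eapply (is_derive_ext_loc (fun t => Cre c0 + A*(exp(al*ln(1+t))/(1+t)^k * m1) + B*(exp(-((1+t)*x*tau))*cos(-((1+t)*y*tau))))).
    - eapply filter_imp; [| exact Hloc]. intros t Ht. simpl.
      rewrite Hf by (apply in_dom_sc; auto). unfold Fk, Ef.
      rewrite Mk_sc, Cexp_expl, Hm by auto. unfold Cadd, sc, Cre, Cim; simpl. ring.
    - auto_derive.
      + rewrite Rplus_0_r, pow1. split; [lra|]. split; [lra|]. exact I.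
      + rewrite !Rplus_0_r, ln_1, Rmult_0_r, exp_0, !pow1, !Rmult_1_l. field. }
  assert (U2 : Cim (Cmul (x,y) (g (x,y))) = A*(al-INR k)*m2 + B*(-tau)*(x*(exp(-(x*tau))*sin(-(y*tau))) + y*(exp(-(x*tau))*cos(-(y*tau))))).
  { rewrite <- (is_derive_unique _ _ _ D2). apply is_derive_unique.
    eapply (is_derive_ext_loc (fun t => Cim c0 + A*(exp(al*ln(1+t))/(1+t)^k * m2) + B*(exp(-((1+t)*x*tau))*sin(-((1+t)*y*tau))))).
    - eapply filter_imp; [| exact Hloc]. intros t Ht. simpl.
      rewrite Hf by (apply in_dom_sc; auto). unfold Fk, Ef.
      rewrite Mk_sc, Cexp_expl, Hm by auto. unfold Cadd, sc, Cre, Cim; simpl. ring.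
    - auto_derive.
      + rewrite Rplus_0_r, pow1. split; [lra|]. split; [lra|]. exact I.
      + rewrite !Rplus_0_r, ln_1, Rmult_0_r, exp_0, !pow1, !Rmult_1_l. field. }
  unfold Fk, Ef. simpl Mk. rewrite Hm, Cexp_expl.
  destruct (g (x,y)) as [g1 g2].
  unfold Cmul, Cre, Cim, Cinv, Cadd, sc, C0 in *; simpl in *.
  f_equal.
  - apply (Rmult_eq_reg_l (x*x+y*y)); [| lra].
    transitivity (x*(x*g1 - y*g2) + y*(x*g2+y*g1)); [ring|].
    rewrite U1, U2. field. lra.
  - apply (Rmult_eq_reg_l (x*x+y*y)); [| lra].
    transitivity (x*(x*g2 + y*g1) - y*(x*g1-y*g2)); [ring|].
    rewrite U1, U2. field. lra.
Qed.

Lemma final_alg al tau b m1 m2 v1 v2 e1 e2 : 0<al<1 -> 0<tau -> 0 < m1*m1+m2*m2 ->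
 al*m1 + b*tau*e1 = 0 -> al*m2 + b*tau*e2 = 0 ->
 al*(al-1)*(m1*v1 - m2*v2) - b*tau*tau*e1 = 0 -> al*(al-1)*(m1*v2+m2*v1) - b*tau*tau*e2 = 0 ->
 al*(al-1)*(al-2)*((m1*v1-m2*v2)*v1 - (m1*v2+m2*v1)*v2) + b*tau*tau*tau*e1 = 0 ->
 al*(al-1)*(al-2)*((m1*v1-m2*v2)*v2 + (m1*v2+m2*v1)*v1) + b*tau*tau*tau*e2 = 0 -> False.
Proof.
  intros Ha Ht Hm E1 E2 E3 E4 E5 E6.
  set (u1 := al*m1). set (u2 := al*m2).
  assert (Hu : 0 < u1*u1+u2*u2).
  { unfold u1, u2. replace (al*m1*(al*m1)+al*m2*(al*m2)) with ((al*al)*(m1*m1+m2*m2)) by ring.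
    apply Rmult_lt_0_compat; nra. }
  set (w1 := (al-1)*v1 + tau). set (w2 := (al-1)*v2).
  assert (E3' : u1*w1 - u2*w2 = 0).
  { assert (H: u1*w1 - u2*w2 = (al*(al-1)*(m1*v1 - m2*v2) - b*tau*tau*e1) + tau*(al*m1 + b*tau*e1))
      by (unfold u1,u2,w1,w2; ring). rewrite H, E3, E1. ring. }
  assert (E4' : u1*w2 + u2*w1 = 0).
  { assert (H: u1*w2 + u2*w1 = (al*(al-1)*(m1*v2+m2*v1) - b*tau*tau*e2) + tau*(al*m2 + b*tau*e2))
      by (unfold u1,u2,w1,w2; ring). rewrite H, E4, E2. ring. }
  assert (W1 : w1 = 0).
  { assert (H: (u1*u1+u2*u2)*w1 = u1*(u1*w1 - u2*w2) + u2*(u1*w2 + u2*w1)) by ring.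
    rewrite E3', E4' in H. assert (H0 : (u1*u1+u2*u2)*w1 = 0) by (rewrite H; ring).
    apply Rmult_integral in H0. destruct H0; lra. }
  assert (W2 : w2 = 0).
  { assert (H: (u1*u1+u2*u2)*w2 = u1*(u1*w2 + u2*w1) - u2*(u1*w1 - u2*w2)) by ring.
    rewrite E3', E4' in H. assert (H0 : (u1*u1+u2*u2)*w2 = 0) by (rewrite H; ring).
    apply Rmult_integral in H0. destruct H0; lra. }
  assert (V2 : v2 = 0).
  { unfold w2 in W2. apply Rmult_integral in W2. destruct W2; lra. }
  subst v2.
  set (K := (al-1)*(al-2)*(v1*v1) - tau*tau).
  assert (K1 : K*u1 = 0).
  { assert (H: K*u1 = (al*(al-1)*(al-2)*((m1*v1-m2*0)*v1 - (m1*0+m2*v1)*0) + b*tau*tau*tau*e1)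
        - tau*tau*(al*m1 + b*tau*e1)) by (unfold K,u1; ring). rewrite H, E5, E1. ring. }
  assert (K2 : K*u2 = 0).
  { assert (H: K*u2 = (al*(al-1)*(al-2)*((m1*v1-m2*0)*0 + (m1*0+m2*v1)*v1) + b*tau*tau*tau*e2)
        - tau*tau*(al*m2 + b*tau*e2)) by (unfold K,u2; ring). rewrite H, E6, E2. ring. }
  assert (K0 : K = 0).
  { assert (H: K*(u1*u1+u2*u2) = u1*(K*u1) + u2*(K*u2)) by ring.
    rewrite K1, K2 in H. assert (H0 : K*(u1*u1+u2*u2) = 0) by (rewrite H; ring).
    apply Rmult_integral in H0. destruct H0; lra. }
  unfold K, w1 in *.
  assert (Ht2 : tau*tau = (al-1)*(al-1)*(v1*v1)).
  { assert (Htau : tau = -((al-1)*v1)) by lra. rewrite Htau. ring. }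
  assert (H: (al-1)*(v1*v1) = 0).
  { assert (Hx: (al-1)*(v1*v1) = -((al-1)*(al-2)*(v1*v1) - tau*tau) - (tau*tau - (al-1)*(al-1)*(v1*v1))) by ring.
    lra. }
  apply Rmult_integral in H. destruct H as [H|H]; [lra|].
  apply Rmult_integral in H. destruct H as [H|H]; subst v1; lra.
Qed.

Lemma Cinv_sq z : z <> C0 -> 0 < Cre (Cinv z) * Cre (Cinv z) + Cim (Cinv z) * Cim (Cinv z).
Proof.
  intro Hz. pose proof (sq_pos z Hz) as Hd. destruct z as [x y].
  unfold Cinv, Cre, Cim in *; simpl in *.
  replace (x / (x*x+y*y) * (x / (x*x+y*y)) + - y / (x*x+y*y) * (- y / (x*x+y*y)))
    with (/ (x*x+y*y)) by (field; lra).
  apply Rinv_0_lt_compat; auto.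
Qed.

Lemma Cpow_sq z al : 0 < Cre (Cpow z al) * Cre (Cpow z al) + Cim (Cpow z al) * Cim (Cpow z al).
Proof.
  unfold Cpow, Cre, Cim; simpl.
  set (r := Rpower (Cnorm z) al). set (t := al * Carg z).
  assert (0 < r) by (unfold r, Rpower; apply exp_pos).
  replace (r * cos t * (r * cos t) + r * sin t * (r * sin t)) with (r*r*(Rsqr (sin t) + Rsqr (cos t)))
    by (unfold Rsqr; ring).
  rewrite sin2_cos2. nra.
Qed.

Lemma Cmul_sq p q : Cre (Cmul p q) * Cre (Cmul p q) + Cim (Cmul p q) * Cim (Cmul p q)
  = (Cre p * Cre p + Cim p * Cim p) * (Cre q * Cre q + Cim q * Cim q).
Proof. unfold Cmul, Cre, Cim; simpl; ring. Qed.

Theorem lemma3p1 (alpha a b tau : R) (halpha : 0 < alpha < 1) (htau : 0 < tau)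
  (Q1 Q2 Q3 : Cpx -> Cpx)
  (hQ1 : forall z, in_dom z -> has_cderiv (Qfun alpha a b tau) z (Q1 z))
  (hQ2 : forall z, in_dom z -> has_cderiv Q1 z (Q2 z))
  (hQ3 : forall z, in_dom z -> has_cderiv Q2 z (Q3 z)) :
  ~ (exists s : Cpx, in_dom s /\
       Qfun alpha a b tau s = C0 /\ Q1 s = C0 /\ Q2 s = C0 /\ Q3 s = C0).
Proof.
  intros [s [Hs [_ [H1 [H2 H3]]]]].
  assert (F0 : forall w, in_dom w -> Qfun alpha a b tau w = Fk alpha tau 0 1 (-b) (RtoC (-a)) w).
  { intros w _. unfold Qfun, Fk, Ef. simpl Mk.
    unfold Csub, Cadd, Copp, RtoC, sc, Cre, Cim.
    destruct (Cexp (Cmul (Copp w) (RtoC tau))) as [e1 e2].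
    unfold Cmul, Cre, Cim; simpl. f_equal; ring. }
  pose proof (step _ _ _ _ _ _ _ _ F0 hQ1) as F1.
  pose proof (step _ _ _ _ _ _ _ _ F1 hQ2) as F2.
  pose proof (step _ _ _ _ _ _ _ _ F2 hQ3) as F3.
  rewrite F1 in H1 by auto. rewrite F2 in H2 by auto. rewrite F3 in H3 by auto.
  assert (Hm : 0 < Cre (Mk alpha 1 s) * Cre (Mk alpha 1 s) + Cim (Mk alpha 1 s) * Cim (Mk alpha 1 s)).
  { simpl Mk. rewrite Cmul_sq. apply Rmult_lt_0_compat. apply Cpow_sq. apply Cinv_sq, Hs. }
  unfold Fk in H1, H2, H3.
  change (Mk alpha 2 s) with (Cmul (Mk alpha 1 s) (Cinv s)) in H2.
  change (Mk alpha 3 s) with (Cmul (Cmul (Mk alpha 1 s) (Cinv s)) (Cinv s)) in H3.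
  destruct (Mk alpha 1 s) as [m1 m2]. destruct (Cinv s) as [v1 v2]. destruct (Ef tau s) as [e1 e2].
  unfold Cadd, Cmul, sc, C0, Cre, Cim in *; simpl in *.
  injection H1; intros H1b H1a. injection H2; intros H2b H2a. injection H3; intros H3b H3a.
  apply (final_alg alpha tau b m1 m2 v1 v2 e1 e2); auto.
  - rewrite <- H1a. simpl. ring.
  - rewrite <- H1b. simpl. ring.
  - rewrite <- H2a. simpl. ring.
  - rewrite <- H2b. simpl. ring.
  - rewrite <- H3a. simpl. ring.
  - rewrite <- H3b. simpl. ring.
Qed.
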